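(* Let $(A,\circ_A,[\cdot,\cdot]_A)$ and $(B,\circ_B,[\cdot,\cdot]_B)$ be dual pre-Poisson algebras. Define bilinear operations on $A\otimes B$ by $$(x\otimes a)\circ_{A\otimes B}(y\otimes b)=(x\circ_A y)\otimes(a\circ_B b),$$ $$[x\otimes a,y\otimes b]_{A\otimes B}=[x,y]_A\otimes(a\circ_B b)+(x\circ_A y)\otimes[a,b]_B,$$ for $x,y\in A$, $a,b\in B$. Then $(A\otimes B,\circ_{A\otimes B},[\cdot,\cdot]_{A\otimes B})$ is a dual pre-Poisson algebra.
   Context: Field $\mathbb{F}$ of characteristic $0$. A dual pre-Poisson algebra is a vector space with bilinear operations $\circ,[\cdot,\cdot]$ satisfying, for all $x,y,z$: $x\circ(y\circ z)=(x\circ y)\circ z=(y\circ x)\circ z$; $[x,[y,z]]=[[x,y],z]+[y,[x,z]]$; $[x,y\circ z]=[x,y]\circ z+y\circ[x,z]$; $[x\circ y,z]=x\circ[y,z]+y\circ[x,z]$; $[x,y]\circ z=-[y,x]\circ z$. *)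

(* Defs.v *)
From HB Require Import structures.
From mathcomp Require Import all_boot all_order all_algebra.
Set Implicit Arguments. Unset Strict Implicit. Unset Printing Implicit Defensive.
Import GRing.Theory.
Local Open Scope ring_scope.

Definition lin_map (F : fieldType) (U W : lmodType F) (g : U -> W) : Prop :=
  forall (c : F) (u v : U), g (c *: u + v) = c *: g u + g v.

Definition bilin (F : fieldType) (U V W : lmodType F) (f : U -> V -> W) : Prop :=
  (forall (c : F) (u1 u2 : U) (v : V), f (c *: u1 + u2) v = c *: f u1 v + f u2 v) /\
  (forall (c : F) (u : U) (v1 v2 : V), f u (c *: v1 + v2) = c *: f u v1 + f u v2).

Definition is_dual_prepoisson (F : fieldType) (A : lmodType F)
    (circ br : A -> A -> A) : Prop :=
  bilin circ /\ bilin br /\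
  (forall x y z, circ x (circ y z) = circ (circ x y) z) /\
  (forall x y z, circ (circ x y) z = circ (circ y x) z) /\
  (forall x y z, br x (br y z) = br (br x y) z + br y (br x z)) /\
  (forall x y z, br x (circ y z) = circ (br x y) z + circ y (br x z)) /\
  (forall x y z, br (circ x y) z = circ x (br y z) + circ y (br x z)) /\
  (forall x y z, circ (br x y) z = - circ (br y x) z).

Definition is_tensor_product (F : fieldType) (A B T : lmodType F)
    (tens : A -> B -> T) : Prop :=
  bilin tens /\
  forall (W : lmodType F) (f : A -> B -> W), bilin f ->
    exists! g : T -> W, lin_map g /\ forall x a, g (tens x a) = f x a.

(* Main.v *)
Require Import Defs.
From HB Require Import structures.
From mathcomp Require Import all_boot all_order all_algebra.
From Stdlib Require Import IndefiniteDescription.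
Import GRing.Theory.
Local Open Scope ring_scope.

Section Helpers.
Set Implicit Arguments. Unset Strict Implicit.
End Helpers.


Section Lin.
Variables (F : fieldType) (U W : lmodType F).

Lemma lin0 (g : U -> W) : lin_map g -> g 0 = 0.
Proof.
move=> hg; have := hg 1 0 0; rewrite !scale1r !addr0 => /(congr1 (fun t => t - g 0)).
by rewrite addrK subrr => <-.
Qed.

Lemma linD (g : U -> W) : lin_map g -> forall u v, g (u + v) = g u + g v.
Proof. by move=> hg u v; have := hg 1 u v; rewrite !scale1r. Qed.

Lemma linZ (g : U -> W) : lin_map g -> forall c u, g (c *: u) = c *: g u.
Proof. by move=> hg c u; have := hg c u 0; rewrite (lin0 hg) !addr0. Qed.

Lemma linN (g : U -> W) : lin_map g -> forall u, g (- u) = - g u.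
Proof. by move=> hg u; rewrite -scaleN1r (linZ hg) scaleN1r. Qed.

Lemma lin_add (g h : U -> W) : lin_map g -> lin_map h -> lin_map (fun t => g t + h t).
Proof.
move=> hg hh c u v; rewrite hg hh scalerDr.
by rewrite addrACA.
Qed.

Lemma lin_opp (g : U -> W) : lin_map g -> lin_map (fun t => - g t).
Proof. by move=> hg c u v; rewrite hg opprD scalerN. Qed.

Lemma lin_comb (g h : U -> W) (d : F) : lin_map g -> lin_map h ->
  lin_map (fun t => d *: g t + h t).
Proof.
move=> hg hh c u v; rewrite hg hh !scalerDr !scalerA mulrC.
by rewrite addrACA.
Qed.
End Lin.

Lemma lin_comp (F : fieldType) (U V W : lmodType F) (g : V -> W) (h : U -> V) :
  lin_map g -> lin_map h -> lin_map (fun t => g (h t)).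
Proof. by move=> hg hh c u v; rewrite hh hg. Qed.

Section Bil.
Variables (F : fieldType) (U V W : lmodType F) (f : U -> V -> W) (hf : bilin f).
Lemma bl1 v : lin_map (fun u => f u v).
Proof. by move=> c u1 u2; case: hf => h _; apply: h. Qed.
Lemma bl2 u : lin_map (f u).
Proof. by move=> c v1 v2; case: hf => _ h; apply: h. Qed.
Lemma bDl u1 u2 v : f (u1 + u2) v = f u1 v + f u2 v.
Proof. exact: (linD (bl1 v)). Qed.
Lemma bDr u v1 v2 : f u (v1 + v2) = f u v1 + f u v2.
Proof. exact: (linD (bl2 u)). Qed.
Lemma bNl u v : f (- u) v = - f u v.
Proof. exact: (linN (bl1 v)). Qed.
Lemma bNr u v : f u (- v) = - f u v.
Proof. exact: (linN (bl2 u)). Qed.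
End Bil.

Section Tens.
Variables (F : fieldType) (A B T : lmodType F) (tens : A -> B -> T)
  (hT : is_tensor_product tens).

Lemma bilin_comp (W : lmodType F) (g : T -> W) : lin_map g ->
  bilin (fun x a => g (tens x a)).
Proof.
case: hT => [[t1 t2] _] hg; split=> c u1 u2 v; first by rewrite t1 hg.
by rewrite t2 hg.
Qed.

Lemma ext (W : lmodType F) (g1 g2 : T -> W) : lin_map g1 -> lin_map g2 ->
  (forall x a, g1 (tens x a) = g2 (tens x a)) -> g1 = g2.
Proof.
move=> h1 h2 e; case: hT => _ U.
have [g [_ u]] := U W _ (bilin_comp h1).
rewrite -(u g1); last by split.
by apply: u; split=> // x a; rewrite e.
Qed.

Lemma liftop (h : A -> B -> A -> B -> T)
  (Hl : forall y b, bilin (fun x a => h x a y b))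
  (Hr : forall x a, bilin (fun y b => h x a y b)) :
  exists op : T -> T -> T, bilin op /\
    forall x a y b, op (tens x a) (tens y b) = h x a y b.
Proof.
case: hT => bt U.
pose L y b := proj1_sig (constructive_indefinite_description _ (U T _ (Hl y b))).
have LP y b : (lin_map (L y b) /\ forall x a, L y b (tens x a) = h x a y b).
  by rewrite /L; case: constructive_indefinite_description => g [].
have kb u : bilin (fun y b => L y b u).
  split=> c u1 u2 v.
    have -> : L (c *: u1 + u2) v = (fun t => c *: L u1 v t + L u2 v t) => //.
    apply: ext; first by case: (LP (c *: u1 + u2) v).
      by apply: lin_comb; [case: (LP u1 v) | case: (LP u2 v)].
    by move=> x a; rewrite !(proj2 (LP _ _)); case: (Hr x a) => ->.
  have -> : L u1 (c *: u2 + v) = (fun t => c *: L u1 u2 t + L u1 v t) => //.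
  apply: ext; first by case: (LP u1 (c *: u2 + v)).
    by apply: lin_comb; [case: (LP u1 u2) | case: (LP u1 v)].
  by move=> x a; rewrite !(proj2 (LP _ _)); case: (Hr x a) => _ ->.
pose M u := proj1_sig (constructive_indefinite_description _ (U T _ (kb u))).
have MP u : (lin_map (M u) /\ forall y b, M u (tens y b) = L y b u).
  by rewrite /M; case: constructive_indefinite_description => g [].
exists (fun u v => M u v); split; last first.
  by move=> x a y b; rewrite (proj2 (MP _)) (proj2 (LP _ _)).
split=> c u1 u2 v; last by case: (MP u1) => ->.
have -> : M (c *: u1 + u2) = (fun t => c *: M u1 t + M u2 t) => //.
apply: ext; first by case: (MP (c *: u1 + u2)).
  by apply: lin_comb; [case: (MP u1) | case: (MP u2)].
by move=> y b; rewrite !(proj2 (MP _)); case: (LP y b) => -> _.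
Qed.

Lemma ext3 (P Q : T -> T -> T -> T) :
  (forall u v, lin_map (P u v)) -> (forall u w, lin_map (fun v => P u v w)) ->
  (forall v w, lin_map (fun u => P u v w)) ->
  (forall u v, lin_map (Q u v)) -> (forall u w, lin_map (fun v => Q u v w)) ->
  (forall v w, lin_map (fun u => Q u v w)) ->
  (forall x a y b z c, P (tens x a) (tens y b) (tens z c) = Q (tens x a) (tens y b) (tens z c)) ->
  forall u v w, P u v w = Q u v w.
Proof.
move=> P3 P2 P1 Q3 Q2 Q1 e.
have s1 x a y b w : P (tens x a) (tens y b) w = Q (tens x a) (tens y b) w.
  by have -> := ext (P3 _ _) (Q3 _ _) (e x a y b).
have s2 x a v w : P (tens x a) v w = Q (tens x a) v w.
  have := ext (P2 (tens x a) w) (Q2 _ w) (fun y b => s1 x a y b w).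
  by move=> /(congr1 (fun g => g v)).
move=> u v w.
have := ext (P1 v w) (Q1 v w) (fun x a => s2 x a v w).
by move=> /(congr1 (fun g => g u)).
Qed.
End Tens.

Lemma lin_id (F : fieldType) (U : lmodType F) : lin_map (fun t : U => t).
Proof. by []. Qed.
Lemma lin_cl (F : fieldType) (U V W X : lmodType F) (f : U -> V -> W) (hf : bilin f)
  (g : X -> U) w : lin_map g -> lin_map (fun t => f (g t) w).
Proof. by move=> hg; apply: (lin_comp (bl1 hf w)). Qed.
Lemma lin_cr (F : fieldType) (U V W X : lmodType F) (f : U -> V -> W) (hf : bilin f)
  u (g : X -> V) : lin_map g -> lin_map (fun t => f u (g t)).
Proof. by move=> hg; apply: (lin_comp (bl2 hf u)). Qed.

Section AC.
Variable V : zmodType.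
Lemma move_front (x l r r' : V) : r = x + r' -> l = r' -> x + l = r.
Proof. by move=> -> ->. Qed.
Lemma front_step (x y l l' : V) : l = x + l' -> y + l = x + (y + l').
Proof. by move=> ->; rewrite addrCA. Qed.
Lemma front_last (x y : V) : y + x = x + y.
Proof. exact: addrC. Qed.
End AC.

Ltac pf := first [ exact: erefl | exact: front_last | (apply: front_step; pf) ].
Ltac acs := first [ exact: erefl | (apply: move_front; [ pf | acs ]) ].
Ltac acsolve := rewrite -?addrA; acs.



Theorem proposition2p5 (F : fieldType) (char0 : [pchar F] =i pred0)
    (A B : lmodType F)
    (circA brA : A -> A -> A) (circB brB : B -> B -> B)
    (hA : is_dual_prepoisson circA brA) (hB : is_dual_prepoisson circB brB)
    (T : lmodType F) (tens : A -> B -> T) (hT : is_tensor_product tens) :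
  (exists (circT brT : T -> T -> T),
     bilin circT /\ bilin brT /\
     (forall x y a b, circT (tens x a) (tens y b) = tens (circA x y) (circB a b)) /\
     (forall x y a b, brT (tens x a) (tens y b) =
                      tens (brA x y) (circB a b) + tens (circA x y) (brB a b))) /\
  (forall circT brT : T -> T -> T,
     bilin circT -> bilin brT ->
     (forall x y a b, circT (tens x a) (tens y b) = tens (circA x y) (circB a b)) ->
     (forall x y a b, brT (tens x a) (tens y b) =
                      tens (brA x y) (circB a b) + tens (circA x y) (brB a b)) ->
     is_dual_prepoisson circT brT).
Proof.
have [[cA1 cA2] [[bA1 bA2] [C1A [C2A [L1A [L2A [L3A L4A]]]]]]] := hA.
have [[cB1 cB2] [[bB1 bB2] [C1B [C2B [L1B [L2B [L3B L4B]]]]]]] := hB.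
have bt := proj1 hT.
have [t1 t2] := bt.
split.
  have [circT [hc ec]] : exists op : T -> T -> T, bilin op /\
    forall x a y b, op (tens x a) (tens y b) = tens (circA x y) (circB a b).
    refine (@liftop _ _ _ _ _ hT (fun x a y b => tens (circA x y) (circB a b)) _ _) => ? ?; split=> c u1 u2 v.
    - by rewrite cA1 t1.
    - by rewrite cB1 t2.
    - by rewrite cA2 t1.
    - by rewrite cB2 t2.
  have [brT [hb eb]] : exists op : T -> T -> T, bilin op /\
    forall x a y b, op (tens x a) (tens y b) =
       tens (brA x y) (circB a b) + tens (circA x y) (brB a b).
    refine (@liftop _ _ _ _ _ hT (fun x a y b => tens (brA x y) (circB a b) + tens (circA x y) (brB a b)) _ _) => ? ?; split=> c u1 u2 v.
    - by rewrite bA1 cA1 !t1 scalerDr addrACA.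
    - by rewrite bB1 cB1 !t2 scalerDr addrACA.
    - by rewrite bA2 cA2 !t1 scalerDr addrACA.
    - by rewrite bB2 cB2 !t2 scalerDr addrACA.
  by exists circT, brT; split=> //; split=> //; split=> x y a b; rewrite ?ec ?eb.
move=> circT brT hc hb ec eb.
have lt u : lin_map (tens u) by move=> c v1 v2; rewrite t2.
have cDl := bDl hc; have cDr := bDr hc; have cNl := bNl hc; have cNr := bNr hc.
have rDl := bDl hb; have rDr := bDr hb; have rNl := bNl hb; have rNr := bNr hb.
have tDl := bDl bt; have tDr := bDr bt; have tNl := bNl bt; have tNr := bNr bt.
Ltac sl hc hb := first [ exact: lin_id | apply: lin_add; sl hc hb | apply: lin_opp; sl hc hb
   | apply: (lin_cl hc); sl hc hb | apply: (lin_cl hb); sl hc hb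
   | apply: (lin_cr hc); sl hc hb | apply: (lin_cr hb); sl hc hb ].
Ltac slin hc hb := move=> ? ? /=; sl hc hb.
split=> //; split=> //.
split.
  refine (@ext3 _ _ _ _ _ hT (fun u v w => circT u (circT v w)) (fun u v w => circT (circT u v) w) _ _ _ _ _ _ _);
    try by slin hc hb.
  by move=> x a y b z c /=; rewrite !ec C1A C1B.
  split.
  refine (@ext3 _ _ _ _ _ hT (fun u v w => circT (circT u v) w) (fun u v w => circT (circT v u) w) _ _ _ _ _ _ _);
    try by slin hc hb.
  move=> x a y b z c /=.
  by rewrite !ec C2A C2B.
  split.
  refine (@ext3 _ _ _ _ _ hT (fun u v w => brT u (brT v w)) (fun u v w => brT (brT u v) w + brT v (brT u w)) _ _ _ _ _ _ _);
    try by slin hc hb.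
  move=> x a y b z c /=.
  rewrite !(ec, eb, rDl, rDr, cDl, cDr) !L2A !L3A !L2B !L3B (L1A x y z) (L1B a b c).
  rewrite !C1A !C1B (C2A y x z) (C2B b a c) (L4A y x z) (L4B b a c) !(tDl, tDr, tNl, tNr).
  rewrite -[LHS]addr0 -(subrr (tens (circA y (brA x z)) (circB (brB a b) c))).
  rewrite -[LHS]addr0 -(subrr (tens (circA (brA x y) z) (circB b (brB a c)))).
  acsolve.

  split.
  refine (@ext3 _ _ _ _ _ hT (fun u v w => brT u (circT v w)) (fun u v w => circT (brT u v) w + circT v (brT u w)) _ _ _ _ _ _ _);
    try by slin hc hb.
  move=> x a y b z c /=.
  rewrite !(ec, eb, rDl, rDr, cDl, cDr, cNl, cNr) ?L2A ?L3A ?L2B ?L3B ?C1A ?C1B ?(tDl, tDr, tNl, tNr).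
  rewrite (C2A y x z) (C2B b a c); acsolve.
  split.
  refine (@ext3 _ _ _ _ _ hT (fun u v w => brT (circT u v) w) (fun u v w => circT u (brT v w) + circT v (brT u w)) _ _ _ _ _ _ _);
    try by slin hc hb.
  move=> x a y b z c /=.
  rewrite !(ec, eb, rDl, rDr, cDl, cDr, cNl, cNr) ?L2A ?L3A ?L2B ?L3B ?C1A ?C1B ?(tDl, tDr, tNl, tNr).
  rewrite (C2A y x z) (C2B b a c); acsolve.
  refine (@ext3 _ _ _ _ _ hT (fun u v w => circT (brT u v) w) (fun u v w => - circT (brT v u) w) _ _ _ _ _ _ _);
    try by slin hc hb.
  move=> x a y b z c /=.
  rewrite !(ec, eb, rDl, rDr, cDl, cDr, cNl, cNr) ?L2A ?L3A ?L2B ?L3B ?C1A ?C1B ?(tDl, tDr, tNl, tNr).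
  rewrite (L4A y x z) (L4B b a c) (C2A y x z) (C2B b a c) ?(tNl, tNr) opprD !opprK; acsolve.
Qed.
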